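(* Every cofibration in $\mathbf{Bigpd}$ has the left lifting property with respect to every trivial fibration: given morphisms $(F,\phi):\mathcal A\to\mathcal B$, $(K,\kappa):\mathcal A\to\mathcal D$, $(G,\gamma):\mathcal B\to\mathcal C$, $(H,\eta):\mathcal D\to\mathcal C$ with $(G,\gamma)\circ(F,\phi)=(H,\eta)\circ(K,\kappa)$, $K$ a cofibration and $G$ a trivial fibration, there exists a morphism $(L,\lambda):\mathcal D\to\mathcal B$ with $(L,\lambda)\circ(K,\kappa)=(F,\phi)$ and $(G,\gamma)\circ(L,\lambda)=(H,\eta)$.
   Context: A bigroupoid $\mathcal B$ consists of: a set $\mathcal B_0$ of 0-cells; for each $A,B\in\mathcal B_0$ a groupoid $\mathcal B(A,B)$ whose objects are 1-cells and whose arrows are 2-cells; composition functors $*$; identity 1-cells $1_A$; inversion functors $(-)^*:\mathcal B(A,B)\to\mathcal B(B,A)$; and natural isomorphisms $\mathbf a:(h*g)*f\Rightarrow h*(g*f)$, $\mathbf l:1_B*f\Rightarrow f$, $\mathbf r:f*1_A\Rightarrow f$, $\mathbf e:f^**f\Rightarrow 1_A$, $\mathbf i:1_B\Rightarrow f*f^*$, such that the pentagon for $\mathbf a$ commutes, $(\mathrm{id}*\mathbf l)\circ\mathbf a=\mathbf r*\mathrm{id}$, and $\mathbf r_f\circ(\mathrm{id}*\mathbf e_f)\circ\mathbf a\circ(\mathbf i_f*\mathrm{id})=\mathbf l_f$. A morphism $(F,\phi):\mathcal A\to\mathcal B$ consists of a function on 0-cells, functors $F_{A,A'}:\mathcal A(A,A')\to\mathcal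 B(FA,FA')$ and natural isomorphisms $\phi_{g,f}:Fg*Ff\Rightarrow F(g*f)$, $\phi_A:1_{FA}\Rightarrow F1_A$, $\phi_f:(Ff)^*\Rightarrow F(f^* )$ satisfying $F\mathbf a\circ\phi\circ(\phi*\mathrm{id})=\phi\circ(\mathrm{id}*\phi)\circ\mathbf a$, $F\mathbf r\circ\phi\circ(\mathrm{id}*\phi_A)=\mathbf r$, $F\mathbf l\circ\phi\circ(\phi_B*\mathrm{id})=\mathbf l$, $F\mathbf e\circ\phi\circ(\phi_f*\mathrm{id})=\phi_A\circ\mathbf e$, $F\mathbf i\circ\phi_B=\phi\circ(\mathrm{id}*\phi_f)\circ\mathbf i$; composition is $(G,\gamma)\circ(F,\phi)=(GF,G\phi\circ\gamma F)$. Fibration: (1) for every 0-cell $A'$ of $\mathcal A$ and 1-cell $b:B\to FA'$ there is $a:A\to A'$ with $FA=B$, $Fa=b$; (2) for every 1-cell $a'$ and 2-cell $\beta:b\Rightarrow Fa'$ there is $\alpha:a\Rightarrow a'$ with $Fa=b$, $F\alpha=\beta$. Cofibration: injective on 0-cells and each $F_{A,A'}$ injective on objects. Weak equivalence: every 0-cell $B$ of $\mathcal B$ admits a 1-cell $B\to FA'$ for some 0-cell $A'$, and each $F_{A,A'}$ is an equivalence of categories. A trivial fibration is a fibration that is a weak equivalence. *)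

(* Defs.v *)
Set Implicit Arguments.
Unset Strict Implicit.

Record GroupoidData := {
  gobj : Type;
  garr : gobj -> gobj -> Type;
  gid : forall x, garr x x;
  gcomp : forall x y z, garr y z -> garr x y -> garr x z;  (* gcomp g f = g o f *)
  ginv : forall x y, garr x y -> garr y x }.

Arguments gobj : clear implicits.
Arguments garr {g} x y.
Arguments gid {g} x.
Arguments gcomp {g x y z} _ _.
Arguments ginv {g x y} _.

Notation "g ⊙ f" := (gcomp g f) (at level 40, left associativity).

Record IsGroupoid (G : GroupoidData) : Prop := {
  gcomp_assoc : forall (x y z w : gobj G) (h : garr z w) (g : garr y z) (f : garr x y),
      h ⊙ (g ⊙ f) = (h ⊙ g) ⊙ f;
  gid_l : forall (x y : gobj G) (f : garr x y), gid y ⊙ f = f;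
  gid_r : forall (x y : gobj G) (f : garr x y), f ⊙ gid x = f;
  ginv_l : forall (x y : gobj G) (f : garr x y), ginv f ⊙ f = gid x;
  ginv_r : forall (x y : gobj G) (f : garr x y), f ⊙ ginv f = gid y }.

Record Groupoid := { gdata :> GroupoidData; gaxioms : IsGroupoid gdata }.

(** An equivalence of categories between groupoids: a functor (F1,F2) admitting
    a functor (P1,P2) in the other direction and natural isomorphisms
    id => P o F and F o P => id (in a groupoid every natural transformation is
    a natural isomorphism). *)
Definition IsEquivOfCats (G H : Groupoid) (F1 : gobj G -> gobj H)
  (F2 : forall a b : gobj G, garr a b -> garr (F1 a) (F1 b)) : Prop :=
  exists (P1 : gobj H -> gobj G)
         (P2 : forall a b : gobj H, garr a b -> garr (P1 a) (P1 b)),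
    (forall b : gobj H, P2 b b (gid b) = gid (P1 b)) /\
    (forall (b b' b'' : gobj H) (β : garr b b') (β' : garr b' b''),
        P2 b b'' (β' ⊙ β) = P2 b' b'' β' ⊙ P2 b b' β) /\
    exists (eta : forall a : gobj G, garr a (P1 (F1 a)))
           (eps : forall b : gobj H, garr (F1 (P1 b)) b),
      (forall (a a' : gobj G) (θ : garr a a'),
          eta a' ⊙ θ = P2 _ _ (F2 a a' θ) ⊙ eta a) /\
      (forall (b b' : gobj H) (β : garr b b'),
          eps b' ⊙ F2 _ _ (P2 b b' β) = β ⊙ eps b).

Arguments IsEquivOfCats {G H} F1 F2.

Record BigroupoidData := {
  bob : Type;
  bhom : bob -> bob -> Groupoid;
  hc1 : forall A B C, gobj (bhom B C) -> gobj (bhom A B) -> gobj (bhom A C);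
  hc2 : forall A B C (g g' : gobj (bhom B C)) (f f' : gobj (bhom A B)),
      garr g g' -> garr f f' -> garr (hc1 g f) (hc1 g' f');
  id1 : forall A, gobj (bhom A A);
  inv1 : forall A B, gobj (bhom A B) -> gobj (bhom B A);
  inv2 : forall A B (f f' : gobj (bhom A B)), garr f f' -> garr (inv1 f) (inv1 f');
  asc : forall A B C D (h : gobj (bhom C D)) (g : gobj (bhom B C)) (f : gobj (bhom A B)),
      garr (hc1 (hc1 h g) f) (hc1 h (hc1 g f));
  lu : forall A B (f : gobj (bhom A B)), garr (hc1 (id1 B) f) f;
  ru : forall A B (f : gobj (bhom A B)), garr (hc1 f (id1 A)) f;
  ev : forall A B (f : gobj (bhom A B)), garr (hc1 (inv1 f) f) (id1 A);
  co : forall A B (f : gobj (bhom A B)), garr (id1 B) (hc1 f (inv1 f)) }.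

Arguments bhom {b} _ _.
Arguments hc1 {b A B C} _ _.
Arguments hc2 {b A B C g g' f f'} _ _.
Arguments id1 {b} A.
Arguments inv1 {b A B} _.
Arguments inv2 {b A B f f'} _.
Arguments asc {b A B C D} h g f.
Arguments lu {b A B} f.
Arguments ru {b A B} f.
Arguments ev {b A B} f.
Arguments co {b A B} f.

Record IsBigroupoid (X : BigroupoidData) : Prop := {
  hc2_id : forall (A B C : bob X) (g : gobj (bhom B C)) (f : gobj (bhom A B)),
      hc2 (gid g) (gid f) = gid (hc1 g f);
  hc2_comp : forall (A B C : bob X) (g g' g'' : gobj (bhom B C)) (f f' f'' : gobj (bhom A B))
      (θ : garr g g') (θ' : garr g' g'') (ψ : garr f f') (ψ' : garr f' f''),
      hc2 (θ' ⊙ θ) (ψ' ⊙ ψ) = hc2 θ' ψ' ⊙ hc2 θ ψ;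
  inv2_id : forall (A B : bob X) (f : gobj (bhom A B)), inv2 (gid f) = gid (inv1 f);
  inv2_comp : forall (A B : bob X) (f f' f'' : gobj (bhom A B))
      (θ : garr f f') (θ' : garr f' f''), inv2 (θ' ⊙ θ) = inv2 θ' ⊙ inv2 θ;
  asc_nat : forall (A B C D : bob X) (h h' : gobj (bhom C D)) (g g' : gobj (bhom B C))
      (f f' : gobj (bhom A B)) (χ : garr h h') (ψ : garr g g') (θ : garr f f'),
      asc h' g' f' ⊙ hc2 (hc2 χ ψ) θ = hc2 χ (hc2 ψ θ) ⊙ asc h g f;
  lu_nat : forall (A B : bob X) (f f' : gobj (bhom A B)) (θ : garr f f'),
      lu f' ⊙ hc2 (gid (id1 B)) θ = θ ⊙ lu f;
  ru_nat : forall (A B : bob X) (f f' : gobj (bhom A B)) (θ : garr f f'),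
      ru f' ⊙ hc2 θ (gid (id1 A)) = θ ⊙ ru f;
  ev_nat : forall (A B : bob X) (f f' : gobj (bhom A B)) (θ : garr f f'),
      ev f' ⊙ hc2 (inv2 θ) θ = gid (id1 A) ⊙ ev f;
  co_nat : forall (A B : bob X) (f f' : gobj (bhom A B)) (θ : garr f f'),
      hc2 θ (inv2 θ) ⊙ co f = co f' ⊙ gid (id1 B);
  pentagon : forall (A B C D E : bob X) (k : gobj (bhom D E)) (h : gobj (bhom C D))
      (g : gobj (bhom B C)) (f : gobj (bhom A B)),
      asc k h (hc1 g f) ⊙ asc (hc1 k h) g f
      = hc2 (gid k) (asc h g f) ⊙ asc k (hc1 h g) f ⊙ hc2 (asc k h g) (gid f);
  triangle : forall (A B C : bob X) (g : gobj (bhom B C)) (f : gobj (bhom A B)),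
      hc2 (gid g) (lu f) ⊙ asc g (id1 B) f = hc2 (ru g) (gid f);
  inverse_coh : forall (A B : bob X) (f : gobj (bhom A B)),
      ru f ⊙ hc2 (gid f) (ev f) ⊙ asc f (inv1 f) f ⊙ hc2 (co f) (gid f) = lu f }.

Record Bigroupoid := { bgdata :> BigroupoidData; bgaxioms : IsBigroupoid bgdata }.

Record MorData (X Y : Bigroupoid) := {
  m0 : bob X -> bob Y;
  m1 : forall a a', gobj (bhom a a') -> gobj (bhom (m0 a) (m0 a'));
  m2 : forall a a' (f g : gobj (bhom a a')), garr f g -> garr (m1 f) (m1 g);
  mc : forall a b c (g : gobj (bhom b c)) (f : gobj (bhom a b)),
      garr (hc1 (m1 g) (m1 f)) (m1 (hc1 g f));
  mu : forall a, garr (id1 (m0 a)) (m1 (id1 a));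
  mi : forall a b (f : gobj (bhom a b)), garr (inv1 (m1 f)) (m1 (inv1 f)) }.

Arguments m0 {X Y} _ _.
Arguments m1 {X Y} _ {a a'} _.
Arguments m2 {X Y} _ {a a' f g} _.
Arguments mc {X Y} _ {a b c} g f.
Arguments mu {X Y} _ a.
Arguments mi {X Y} _ {a b} f.

Record IsMorphism (X Y : Bigroupoid) (F : MorData X Y) : Prop := {
  m2_id : forall (a a' : bob X) (f : gobj (bhom a a')), m2 F (gid f) = gid (m1 F f);
  m2_comp : forall (a a' : bob X) (f f' f'' : gobj (bhom a a'))
      (θ : garr f f') (θ' : garr f' f''), m2 F (θ' ⊙ θ) = m2 F θ' ⊙ m2 F θ;
  mc_nat : forall (a b c : bob X) (g g' : gobj (bhom b c)) (f f' : gobj (bhom a b))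
      (θ : garr g g') (ψ : garr f f'),
      mc F g' f' ⊙ hc2 (m2 F θ) (m2 F ψ) = m2 F (hc2 θ ψ) ⊙ mc F g f;
  mi_nat : forall (a b : bob X) (f f' : gobj (bhom a b)) (θ : garr f f'),
      mi F f' ⊙ inv2 (m2 F θ) = m2 F (inv2 θ) ⊙ mi F f;
  m_asc : forall (a b c d : bob X) (h : gobj (bhom c d)) (g : gobj (bhom b c))
      (f : gobj (bhom a b)),
      m2 F (asc h g f) ⊙ mc F (hc1 h g) f ⊙ hc2 (mc F h g) (gid (m1 F f))
      = mc F h (hc1 g f) ⊙ hc2 (gid (m1 F h)) (mc F g f) ⊙ asc (m1 F h) (m1 F g) (m1 F f);
  m_ru : forall (a b : bob X) (f : gobj (bhom a b)),
      m2 F (ru f) ⊙ mc F f (id1 a) ⊙ hc2 (gid (m1 F f)) (mu F a) = ru (m1 F f);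
  m_lu : forall (a b : bob X) (f : gobj (bhom a b)),
      m2 F (lu f) ⊙ mc F (id1 b) f ⊙ hc2 (mu F b) (gid (m1 F f)) = lu (m1 F f);
  m_ev : forall (a b : bob X) (f : gobj (bhom a b)),
      m2 F (ev f) ⊙ mc F (inv1 f) f ⊙ hc2 (mi F f) (gid (m1 F f)) = mu F a ⊙ ev (m1 F f);
  m_co : forall (a b : bob X) (f : gobj (bhom a b)),
      m2 F (co f) ⊙ mu F b
      = mc F f (inv1 f) ⊙ hc2 (gid (m1 F f)) (mi F f) ⊙ co (m1 F f) }.

Definition mcompose (X Y Z : Bigroupoid) (G : MorData Y Z) (F : MorData X Y) : MorData X Z :=
  {| m0 := fun a => m0 G (m0 F a);
     m1 := fun a a' f => m1 G (m1 F f);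
     m2 := fun a a' f g θ => m2 G (m2 F θ);
     mc := fun a b c g f => m2 G (mc F g f) ⊙ mc G (m1 F g) (m1 F f);
     mu := fun a => m2 G (mu F a) ⊙ mu G (m0 F a);
     mi := fun a b f => m2 G (mi F f) ⊙ mi G (m1 F f) |}.

Definition IsFibration (X Y : Bigroupoid) (F : MorData X Y) : Prop :=
  (forall (a' : bob X) (b : bob Y) (g : gobj (bhom b (m0 F a'))),
      exists (a : bob X) (f : gobj (bhom a a')),
        existT (fun x : bob Y => gobj (bhom x (m0 F a'))) (m0 F a) (m1 F f)
        = existT (fun x : bob Y => gobj (bhom x (m0 F a'))) b g) /\
  (forall (a a' : bob X) (f' : gobj (bhom a a')) (g : gobj (bhom (m0 F a) (m0 F a')))
          (β : garr g (m1 F f')),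
      exists (f : gobj (bhom a a')) (α : garr f f'),
        existT (fun x : gobj (bhom (m0 F a) (m0 F a')) => garr x (m1 F f')) (m1 F f) (m2 F α)
        = existT (fun x : gobj (bhom (m0 F a) (m0 F a')) => garr x (m1 F f')) g β).

Definition IsCofibration (X Y : Bigroupoid) (F : MorData X Y) : Prop :=
  (forall a b : bob X, m0 F a = m0 F b -> a = b) /\
  (forall (a a' : bob X) (f g : gobj (bhom a a')), m1 F f = m1 F g -> f = g).

Definition IsWeakEquivalence (X Y : Bigroupoid) (F : MorData X Y) : Prop :=
  (forall b : bob Y, exists a' : bob X, inhabited (gobj (bhom b (m0 F a')))) /\
  (forall a a' : bob X,
      IsEquivOfCats (fun f : gobj (bhom a a') => m1 F f) (fun f g (θ : garr f g) => m2 F θ)).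

Definition IsTrivialFibration (X Y : Bigroupoid) (F : MorData X Y) : Prop :=
  IsFibration F /\ IsWeakEquivalence F.

(* Main.v *)
Require Import Defs.
From Stdlib Require Import Classical ClassicalEpsilon FunctionalExtensionality Eqdep.
Set Implicit Arguments.
Unset Strict Implicit.

Lemma assocL (G : Groupoid) (x y z w : gobj G) (h : garr z w) (g : garr y z) (f : garr x y) :
  h ⊙ (g ⊙ f) = (h ⊙ g) ⊙ f.
Proof. apply (gcomp_assoc (gaxioms G)). Qed.
Lemma idL (G : Groupoid) (x y : gobj G) (f : garr x y) : gid y ⊙ f = f.
Proof. apply (gid_l (gaxioms G)). Qed.
Lemma idR (G : Groupoid) (x y : gobj G) (f : garr x y) : f ⊙ gid x = f.
Proof. apply (gid_r (gaxioms G)). Qed.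
Lemma invL (G : Groupoid) (x y : gobj G) (f : garr x y) : ginv f ⊙ f = gid x.
Proof. apply (ginv_l (gaxioms G)). Qed.
Lemma invR (G : Groupoid) (x y : gobj G) (f : garr x y) : f ⊙ ginv f = gid y.
Proof. apply (ginv_r (gaxioms G)). Qed.

Lemma lcancel (G : Groupoid) (x y z : gobj G) (e : garr y z) (a b : garr x y) :
  e ⊙ a = e ⊙ b -> a = b.
Proof.
  intro E. rewrite <- (idL a), <- (idL b), <- (invL e), <- !assocL, E. reflexivity.
Qed.
Lemma rcancel (G : Groupoid) (x y z : gobj G) (e : garr x y) (a b : garr y z) :
  a ⊙ e = b ⊙ e -> a = b.
Proof.
  intro E. rewrite <- (idR a), <- (idR b), <- (invR e), !assocL, E. reflexivity.
Qed.
Lemma pre2 (G : Groupoid) (x y z w : gobj G) (a : garr y z) (b : garr x y) (c : garr x z) :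
  a ⊙ b = c -> forall (p : garr z w), p ⊙ a ⊙ b = p ⊙ c.
Proof. intros E p. rewrite <- assocL, E. reflexivity. Qed.
Lemma pre3 (G : Groupoid) (x y z u w : gobj G) (a : garr z u) (a' : garr y z) (b : garr x y) (c : garr x u) :
  a ⊙ a' ⊙ b = c -> forall (p : garr u w), p ⊙ a ⊙ a' ⊙ b = p ⊙ c.
Proof. intros E p. rewrite <- !assocL, <- E, !assocL. reflexivity. Qed.
Lemma pre4 (G : Groupoid) (x y z u v w : gobj G) (a0 : garr u v) (a : garr z u) (a' : garr y z) (b : garr x y) (c : garr x v) :
  a0 ⊙ a ⊙ a' ⊙ b = c -> forall (p : garr v w), p ⊙ a0 ⊙ a ⊙ a' ⊙ b = p ⊙ c.
Proof. intros E p. rewrite <- !assocL, <- E, !assocL. reflexivity. Qed.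

Ltac normL := repeat rewrite assocL.
Ltac rwl E := first [ rewrite (pre4 E) | rewrite (pre3 E) | rewrite (pre2 E) | rewrite E ]; normL.

Lemma tf_obj (B C : Bigroupoid) (G : MorData B C) :
  IsTrivialFibration G -> forall c : bob C, exists b, m0 G b = c.
Proof.
  intros [[F1 F2] [W1 W2]] c.
  destruct (W1 c) as [a' [g]].
  destruct (F1 a' c g) as [a [f E]].
  exists a. exact (f_equal (@projT1 _ _) E).
Qed.

Lemma tf_faithful (B C : Bigroupoid) (G : MorData B C) :
  IsTrivialFibration G -> forall (b b' : bob B) (f g : gobj (bhom b b')) (t t' : garr f g),
  m2 G t = m2 G t' -> t = t'.
Proof.
  intros [_ [_ W2]] b b' f g t t' E.
  destruct (W2 b b') as [P1 [P2 [_ [_ [eta [eps [N1 N2]]]]]]].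
  apply (lcancel (e:=eta g)). rewrite (N1 _ _ t), (N1 _ _ t'), E. reflexivity.
Qed.

Lemma tf_full (B C : Bigroupoid) (G : MorData B C) :
  IsTrivialFibration G -> forall (b b' : bob B) (f g : gobj (bhom b b')) (be : garr (m1 G f) (m1 G g)),
  exists t, m2 G t = be.
Proof.
  intros [_ [_ W2]] b b' f g be.
  destruct (W2 b b') as [P1 [P2 [_ [_ [eta [eps [N1 N2]]]]]]].
  exists (ginv (eta g) ⊙ (P2 _ _ be ⊙ eta f)).
  set (t := ginv (eta g) ⊙ (P2 _ _ be ⊙ eta f)).
  assert (E1 : eta g ⊙ t = P2 _ _ be ⊙ eta f).
  { unfold t. rewrite assocL, invR, idL. reflexivity. }
  rewrite N1 in E1. apply rcancel in E1.
  apply (rcancel (e:=eps (m1 G f))). rewrite <- !N2. simpl. rewrite E1. reflexivity.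
Qed.

Lemma tf_surj1 (B C : Bigroupoid) (G : MorData B C) :
  IsTrivialFibration G -> forall (b b' : bob B) (u : gobj (bhom (m0 G b) (m0 G b'))),
  exists f : gobj (bhom b b'), m1 G f = u.
Proof.
  intros [[_ F2] [_ W2]] b b' u.
  destruct (W2 b b') as [P1 [P2 [_ [_ [eta [eps [N1 N2]]]]]]].
  destruct (F2 b b' (P1 u) u (ginv (eps u))) as [f [al E]].
  exists f. exact (f_equal (@projT1 _ _) E).
Qed.

Lemma mor_eq1 (X Y : Bigroupoid) m0 m1 m1' m2 m2' c c' u u' i i' :
  @Build_MorData X Y m0 m1 m2 c u i = @Build_MorData X Y m0 m1' m2' c' u' i' -> m1 = m1'.
Proof. intro E. injection E. intros. apply inj_pair2 in H3. exact H3. Qed.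
Lemma mor_eq2 (X Y : Bigroupoid) m0 m1 m2 m2' c c' u u' i i' :
  @Build_MorData X Y m0 m1 m2 c u i = @Build_MorData X Y m0 m1 m2' c' u' i' ->
  m2 = m2' /\ c = c' /\ u = u' /\ i = i'.
Proof. intro E. injection E. intros.
  apply inj_pair2 in H, H0, H1, H2. apply inj_pair2 in H, H0, H1, H2. auto. Qed.

Lemma tf_lift (B C : Bigroupoid) (G : MorData B C) :
  IsTrivialFibration G -> forall (b b' : bob B) (x y : gobj (bhom b b')) (w : gobj (bhom (m0 G b) (m0 G b')))
  (h : garr w (m1 G y)) (c : garr w (m1 G x)), exists t : garr x y, m2 G t ⊙ c = h.
Proof.
  intros TF b b' x y w h c.
  destruct (tf_full TF (h ⊙ ginv c)) as [t et]. exists t. rewrite et.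
  rewrite <- assocL, invL, idR. reflexivity.
Qed.

Lemma hc2_combL (X : Bigroupoid) (A0 B0 C0 : bob X) (g g' g'' : gobj (bhom B0 C0)) (f : gobj (bhom A0 B0))
  (x : garr g' g'') (y : garr g g') : hc2 x (gid f) ⊙ hc2 y (gid f) = hc2 (x ⊙ y) (gid f).
Proof. rewrite <- (hc2_comp (bgaxioms X)), idL. reflexivity. Qed.
Lemma hc2_combR (X : Bigroupoid) (A0 B0 C0 : bob X) (g : gobj (bhom B0 C0)) (f f' f'' : gobj (bhom A0 B0))
  (x : garr f' f'') (y : garr f f') : hc2 (gid g) x ⊙ hc2 (gid g) y = hc2 (gid g) (x ⊙ y).
Proof. rewrite <- (hc2_comp (bgaxioms X)), idL. reflexivity. Qed.
Lemma hc2_combL_p (X : Bigroupoid) (A0 B0 C0 : bob X) (g g' g'' : gobj (bhom B0 C0)) (f : gobj (bhom A0 B0))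
  (x : garr g' g'') (y : garr g g') w (p : garr (hc1 g'' f) w) :
  p ⊙ hc2 x (gid f) ⊙ hc2 y (gid f) = p ⊙ hc2 (x ⊙ y) (gid f).
Proof. apply pre2, hc2_combL. Qed.
Lemma hc2_combR_p (X : Bigroupoid) (A0 B0 C0 : bob X) (g : gobj (bhom B0 C0)) (f f' f'' : gobj (bhom A0 B0))
  (x : garr f' f'') (y : garr f f') w (p : garr (hc1 g f'') w) :
  p ⊙ hc2 (gid g) x ⊙ hc2 (gid g) y = p ⊙ hc2 (gid g) (x ⊙ y).
Proof. apply pre2, hc2_combR. Qed.
Ltac comb := repeat (first [rewrite hc2_combL_p | rewrite hc2_combR_p | rewrite hc2_combL | rewrite hc2_combR]).
Ltac combin H := repeat (first [rewrite hc2_combL_p in H | rewrite hc2_combR_p in H | rewrite hc2_combL in H | rewrite hc2_combR in H]).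
Set Implicit Arguments.
Unset Strict Implicit.
Ltac normL_in H := repeat rewrite assocL in H.

Theorem lemma4p2 (A B C D : Bigroupoid)
  (F : MorData A B) (K : MorData A D) (G : MorData B C) (H : MorData D C) :
  IsMorphism F -> IsMorphism K -> IsMorphism G -> IsMorphism H ->
  mcompose G F = mcompose H K ->
  IsCofibration K -> IsTrivialFibration G ->
  exists L : MorData D B,
    IsMorphism L /\ mcompose L K = F /\ mcompose G L = H.
Proof.
  intros HF HK HG HH E [Kinj0 Kinj1] TF.
  destruct F as [F0 F1 F2 Fc Fu Fi]. destruct H as [H0 H1 H2 Hc Hu Hi].
  assert (E0 : forall a, m0 G (F0 a) = H0 (m0 K a)).
  { intro a. exact (f_equal (fun M => m0 M a) E). }
  assert (L0ex : exists L0 : bob D -> bob B, (forall a, L0 (m0 K a) = F0 a) /\ (forall d, m0 G (L0 d) = H0 d)).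
  { assert (P : forall d, exists b, (forall a, m0 K a = d -> b = F0 a) /\ m0 G b = H0 d).
    { intro d. destruct (classic (exists a, m0 K a = d)) as [[a ea]|na].
      - exists (F0 a). split.
        + intros a2 e2. rewrite <- e2 in ea. apply Kinj0 in ea. subst. reflexivity.
        + subst. apply E0.
      - destruct (tf_obj TF (H0 d)) as [b eb]. exists b. split; auto.
        intros a ea. exfalso; eauto. }
    exists (fun d => proj1_sig (constructive_indefinite_description _ (P d))).
    split.
    - intro a. destruct (constructive_indefinite_description _ (P (m0 K a))) as [b [Pb1 Pb2]]. simpl. auto.
    - intro d. destruct (constructive_indefinite_description _ (P d)) as [b [Pb1 Pb2]]. simpl. auto. }
  destruct L0ex as [L0 [PL0a PL0b]].
  assert (e : (fun a => L0 (m0 K a)) = F0) by (apply functional_extensionality; auto).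
  subst F0.
  assert (e : (fun d => m0 G (L0 d)) = H0) by (apply functional_extensionality; auto).
  subst H0. clear PL0a PL0b E0.
  cbn in E.
  pose proof (mor_eq1 E) as E1.
  assert (E1' : forall a a' (f : gobj (bhom a a')), m1 G (F1 a a' f) = H1 _ _ (m1 K f)).
  { intros a a' f. exact (f_equal (fun h => h a a' f) E1). }
  clear E1.
  assert (L1ex : exists L1 : forall d d', gobj (bhom d d') -> gobj (bhom (L0 d) (L0 d')),
     (forall a a' (f : gobj (bhom a a')), L1 _ _ (m1 K f) = F1 a a' f) /\
     (forall d d' (u : gobj (bhom d d')), m1 G (L1 _ _ u) = H1 d d' u)).
  { assert (P : forall d d' (u : gobj (bhom d d')), exists v : gobj (bhom (L0 d) (L0 d')),
       (forall a a' (f : gobj (bhom a a')),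
          existT (fun p : bob D * bob D => gobj (bhom (fst p) (snd p))) (m0 K a, m0 K a') (m1 K f)
          = existT (fun p : bob D * bob D => gobj (bhom (fst p) (snd p))) (d, d') u ->
          existT (fun p : bob D * bob D => gobj (bhom (L0 (fst p)) (L0 (snd p)))) (m0 K a, m0 K a') (F1 a a' f)
          = existT (fun p : bob D * bob D => gobj (bhom (L0 (fst p)) (L0 (snd p)))) (d, d') v)
       /\ m1 G v = H1 d d' u).
    { intros d d' u.
      destruct (classic (exists a a' (f : gobj (bhom a a')),
          existT (fun p : bob D * bob D => gobj (bhom (fst p) (snd p))) (m0 K a, m0 K a') (m1 K f)
          = existT (fun p : bob D * bob D => gobj (bhom (fst p) (snd p))) (d, d') u)) as [[a [a' [f ef]]]|nf].
      - pose proof (f_equal (@projT1 _ _) ef) as ep. simpl in ep. injection ep. intros e2 e1.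
        subst d d'. apply inj_pair2 in ef. subst u.
        exists (F1 a a' f). split; [|apply E1'].
        intros a2 a2' f2 ef2.
        clear ep. pose proof (f_equal (@projT1 _ _) ef2) as ep. simpl in ep. injection ep. intros e2 e1.
        apply Kinj0 in e1. apply Kinj0 in e2. subst a2 a2'.
        apply inj_pair2 in ef2. apply Kinj1 in ef2. subst f2. reflexivity.
      - destruct (tf_surj1 TF (H1 d d' u)) as [v ev]. exists v. split; [|exact ev].
        intros a a' f ef. exfalso. eauto. }
    exists (fun d d' u => proj1_sig (constructive_indefinite_description _ (P d d' u))).
    split.
    - intros a a' f. destruct (constructive_indefinite_description _ (P _ _ (m1 K f))) as [v [Pv1 Pv2]].
      simpl. specialize (Pv1 a a' f eq_refl). apply inj_pair2 in Pv1. auto.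
    - intros d d' u. destruct (constructive_indefinite_description _ (P d d' u)) as [v [Pv1 Pv2]]. simpl. auto. }
  destruct L1ex as [L1 [PL1a PL1b]].
  assert (e : (fun a a' f => L1 _ _ (m1 K f)) = F1).
  { apply functional_extensionality_dep; intro a. apply functional_extensionality_dep; intro a'.
    apply functional_extensionality_dep; intro f. auto. }
  subst F1.
  assert (e : (fun d d' u => m1 G (L1 d d' u)) = H1).
  { apply functional_extensionality_dep; intro a. apply functional_extensionality_dep; intro a'.
    apply functional_extensionality_dep; intro f. auto. }
  subst H1. clear PL1a PL1b E1'.
  cbn in E. apply mor_eq2 in E. destruct E as [E2 [Ec [Eu Ei]]].
  assert (E2' : forall a a' f g (θ : garr f g), m2 G (F2 a a' f g θ) = H2 _ _ _ _ (m2 K θ)).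
  { intros a a' f g θ. exact (f_equal (fun h => h a a' f g θ) E2). }
  clear E2.
  assert (L2ex : exists L2 : forall d d' (u v : gobj (bhom d d')), garr u v -> garr (L1 d d' u) (L1 d d' v),
     forall d d' u v (β : garr u v), m2 G (L2 d d' u v β) = H2 d d' u v β).
  { assert (P : forall d d' (u v : gobj (bhom d d')) (β : garr u v), exists t : garr (L1 d d' u) (L1 d d' v),
       m2 G t = H2 d d' u v β).
    { intros. apply (tf_full TF). }
    exists (fun d d' u v β => proj1_sig (constructive_indefinite_description _ (P d d' u v β))).
    intros d d' u v β. destruct (constructive_indefinite_description _ (P d d' u v β)) as [t Pt]. simpl. auto. }
  destruct L2ex as [L2 PL2].
  assert (e : (fun a a' f g (θ : garr f g) => L2 _ _ _ _ (m2 K θ)) = F2).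
  { do 4 (apply functional_extensionality_dep; intro). apply functional_extensionality_dep; intro θ.
    apply (tf_faithful TF). rewrite PL2, E2'. reflexivity. }
  subst F2.
  assert (e : (fun d d' u v (β : garr u v) => m2 G (L2 d d' u v β)) = H2).
  { do 4 (apply functional_extensionality_dep; intro). apply functional_extensionality_dep; intro θ. auto. }
  subst H2. clear PL2 E2'.
  assert (Ec' : forall a b c (g : gobj (bhom b c)) (f : gobj (bhom a b)),
     m2 G (Fc a b c g f) ⊙ mc G (L1 _ _ (m1 K g)) (L1 _ _ (m1 K f))
     = m2 G (L2 _ _ _ _ (mc K g f)) ⊙ Hc _ _ _ (m1 K g) (m1 K f)).
  { intros a b c g f. exact (f_equal (fun h => h a b c g f) Ec). }
  clear Ec.
  assert (Lcex : exists Lc : forall d d' d'' (g : gobj (bhom d' d'')) (f : gobj (bhom d d')),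
       garr (hc1 (L1 _ _ g) (L1 _ _ f)) (L1 _ _ (hc1 g f)),
     forall d d' d'' g f, m2 G (Lc d d' d'' g f) ⊙ mc G (L1 _ _ g) (L1 _ _ f) = Hc d d' d'' g f).
  { assert (P : forall d d' d'' (g : gobj (bhom d' d'')) (f : gobj (bhom d d')),
       exists t : garr (hc1 (L1 _ _ g) (L1 _ _ f)) (L1 _ _ (hc1 g f)),
       m2 G t ⊙ mc G (L1 _ _ g) (L1 _ _ f) = Hc d d' d'' g f).
    { intros. apply (tf_lift TF). }
    exists (fun d d' d'' g f => proj1_sig (constructive_indefinite_description _ (P d d' d'' g f))).
    intros. destruct (constructive_indefinite_description _ (P d d' d'' g f)) as [t Pt]. simpl. auto. }
  destruct Lcex as [Lc PLc].
  assert (e : (fun a b c (g : gobj (bhom b c)) (f : gobj (bhom a b)) =>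
       L2 _ _ _ _ (mc K g f) ⊙ Lc _ _ _ (m1 K g) (m1 K f)) = Fc).
  { do 4 (apply functional_extensionality_dep; intro). apply functional_extensionality_dep; intro f.
    apply (tf_faithful TF). rewrite (m2_comp HG).
    apply (rcancel (e := mc G (L1 _ _ (m1 K x2)) (L1 _ _ (m1 K f)))).
    rewrite Ec', <- assocL, PLc. reflexivity. }
  subst Fc.
  assert (e : (fun d d' d'' (g : gobj (bhom d' d'')) (f : gobj (bhom d d')) =>
       m2 G (Lc d d' d'' g f) ⊙ mc G (L1 _ _ g) (L1 _ _ f)) = Hc).
  { do 4 (apply functional_extensionality_dep; intro). apply functional_extensionality_dep; intro f. auto. }
  subst Hc. clear PLc Ec'.
  assert (Eu' : forall a, m2 G (Fu a) ⊙ mu G (L0 (m0 K a)) = m2 G (L2 _ _ _ _ (mu K a)) ⊙ Hu (m0 K a)).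
  { intros a. exact (f_equal (fun h => h a) Eu). }
  clear Eu.
  assert (Luex : exists Lu : forall d, garr (id1 (L0 d)) (L1 d d (id1 d)),
     forall d, m2 G (Lu d) ⊙ mu G (L0 d) = Hu d).
  { assert (P : forall d, exists t : garr (id1 (L0 d)) (L1 d d (id1 d)), m2 G t ⊙ mu G (L0 d) = Hu d).
    { intros. apply (tf_lift TF). }
    exists (fun d => proj1_sig (constructive_indefinite_description _ (P d))).
    intros. destruct (constructive_indefinite_description _ (P d)) as [t Pt]. simpl. auto. }
  destruct Luex as [Lu PLu].
  assert (e : (fun a => L2 _ _ _ _ (mu K a) ⊙ Lu (m0 K a)) = Fu).
  { apply functional_extensionality_dep; intro a.
    apply (tf_faithful TF). rewrite (m2_comp HG).
    apply (rcancel (e := mu G (L0 (m0 K a)))).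
    rewrite Eu', <- assocL, PLu. reflexivity. }
  subst Fu.
  assert (e : (fun d => m2 G (Lu d) ⊙ mu G (L0 d)) = Hu).
  { apply functional_extensionality_dep; intro. auto. }
  subst Hu. clear PLu Eu'.
  assert (Ei' : forall a b (f : gobj (bhom a b)), m2 G (Fi a b f) ⊙ mi G (L1 _ _ (m1 K f))
      = m2 G (L2 _ _ _ _ (mi K f)) ⊙ Hi _ _ (m1 K f)).
  { intros a b f. exact (f_equal (fun h => h a b f) Ei). }
  clear Ei.
  assert (Liex : exists Li : forall d d' (f : gobj (bhom d d')), garr (inv1 (L1 _ _ f)) (L1 _ _ (inv1 f)),
     forall d d' f, m2 G (Li d d' f) ⊙ mi G (L1 _ _ f) = Hi d d' f).
  { assert (P : forall d d' (f : gobj (bhom d d')), exists t : garr (inv1 (L1 _ _ f)) (L1 _ _ (inv1 f)),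
       m2 G t ⊙ mi G (L1 _ _ f) = Hi d d' f).
    { intros. apply (tf_lift TF). }
    exists (fun d d' f => proj1_sig (constructive_indefinite_description _ (P d d' f))).
    intros. destruct (constructive_indefinite_description _ (P d d' f)) as [t Pt]. simpl. auto. }
  destruct Liex as [Li PLi].
  assert (e : (fun a b (f : gobj (bhom a b)) => L2 _ _ _ _ (mi K f) ⊙ Li _ _ (m1 K f)) = Fi).
  { do 2 (apply functional_extensionality_dep; intro). apply functional_extensionality_dep; intro f.
    apply (tf_faithful TF). rewrite (m2_comp HG).
    apply (rcancel (e := mi G (L1 _ _ (m1 K f)))).
    rewrite Ei', <- assocL, PLi. reflexivity. }
  subst Fi.
  assert (e : (fun d d' (f : gobj (bhom d d')) => m2 G (Li d d' f) ⊙ mi G (L1 _ _ f)) = Hi).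
  { do 2 (apply functional_extensionality_dep; intro). apply functional_extensionality_dep; intro. auto. }
  subst Hi. clear PLi Ei'.
  exists {| m0 := L0; m1 := L1; m2 := L2; mc := Lc; mu := Lu; mi := Li |}.
  split; [| split; reflexivity].
  clear HF.
  constructor.
  - intros a a' f. cbn. apply (tf_faithful TF). rewrite (m2_id HG).
    exact (m2_id HH f).
  - intros a a' f f' f'' t t'. cbn. apply (tf_faithful TF). rewrite (m2_comp HG).
    exact (m2_comp HH t t').
  - intros a b c g g' f f' t p. cbn. apply (tf_faithful TF). rewrite !(m2_comp HG).
    apply (rcancel (e := mc G (L1 _ _ g) (L1 _ _ f))). normL.
    rwl (eq_sym (mc_nat HG (L2 _ _ _ _ t) (L2 _ _ _ _ p))).
    pose proof (mc_nat HH t p) as N. cbn in N. normL_in N. rewrite N. reflexivity.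
  - intros a b f f' t. cbn. apply (tf_faithful TF). rewrite !(m2_comp HG).
    apply (rcancel (e := mi G (L1 _ _ f))). normL.
    rwl (eq_sym (mi_nat HG (L2 _ _ _ _ t))).
    pose proof (mi_nat HH t) as N. cbn in N. normL_in N. rewrite N. reflexivity.
  - intros a b c d h g f. cbn. apply (tf_faithful TF). rewrite !(m2_comp HG).
    apply (rcancel (e := mc G (hc1 (L1 _ _ h) (L1 _ _ g)) (L1 _ _ f)
                      ⊙ hc2 (mc G (L1 _ _ h) (L1 _ _ g)) (gid (m1 G (L1 _ _ f))))). normL.
    pose proof (mc_nat HG (Lc _ _ _ h g) (gid (L1 _ _ f))) as N1. rewrite (m2_id HG) in N1.
    rwl (eq_sym N1). comb.
    pose proof (m_asc HH h g f) as HA. cbn in HA. normL_in HA. rewrite HA.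
    pose proof (m_asc HG (L1 _ _ h) (L1 _ _ g) (L1 _ _ f)) as GA. normL_in GA. rwl GA.
    pose proof (mc_nat HG (gid (L1 _ _ h)) (Lc _ _ _ g f)) as N2. rewrite (m2_id HG) in N2.
    rwl (eq_sym N2). comb. reflexivity.
  - intros a b f. cbn. apply (tf_faithful TF). rewrite !(m2_comp HG).
    apply (rcancel (e := mc G (L1 _ _ f) (id1 (L0 a)) ⊙ hc2 (gid (m1 G (L1 _ _ f))) (mu G (L0 a)))). normL.
    pose proof (mc_nat HG (gid (L1 _ _ f)) (Lu a)) as N. rewrite (m2_id HG) in N.
    rwl (eq_sym N). comb.
    pose proof (m_ru HH f) as HR. cbn in HR. normL_in HR. rewrite HR.
    pose proof (m_ru HG (L1 _ _ f)) as GR. normL_in GR. rewrite GR. reflexivity.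
  - intros a b f. cbn. apply (tf_faithful TF). rewrite !(m2_comp HG).
    apply (rcancel (e := mc G (id1 (L0 b)) (L1 _ _ f) ⊙ hc2 (mu G (L0 b)) (gid (m1 G (L1 _ _ f))))). normL.
    pose proof (mc_nat HG (Lu b) (gid (L1 _ _ f))) as N. rewrite (m2_id HG) in N.
    rwl (eq_sym N). comb.
    pose proof (m_lu HH f) as HR. cbn in HR. normL_in HR. rewrite HR.
    pose proof (m_lu HG (L1 _ _ f)) as GR. normL_in GR. rewrite GR. reflexivity.
  - intros a b f. cbn. apply (tf_faithful TF). rewrite !(m2_comp HG).
    apply (rcancel (e := mc G (inv1 (L1 _ _ f)) (L1 _ _ f) ⊙ hc2 (mi G (L1 _ _ f)) (gid (m1 G (L1 _ _ f))))). normL.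
    pose proof (mc_nat HG (Li _ _ f) (gid (L1 _ _ f))) as N. rewrite (m2_id HG) in N.
    rwl (eq_sym N). comb.
    pose proof (m_ev HH f) as HE. cbn in HE. normL_in HE. rewrite HE.
    pose proof (m_ev HG (L1 _ _ f)) as GE. normL_in GE. rwl GE. reflexivity.
  - intros a b f. cbn. apply (tf_faithful TF). rewrite !(m2_comp HG).
    apply (rcancel (e := mu G (L0 b))). normL.
    pose proof (m_co HH f) as HC. cbn in HC. normL_in HC. rewrite HC.
    pose proof (m_co HG (L1 _ _ f)) as GC. normL_in GC. rwl GC.
    pose proof (mc_nat HG (gid (L1 _ _ f)) (Li _ _ f)) as N. rewrite (m2_id HG) in N.
    rwl (eq_sym N). comb. reflexivity.
Qed.
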